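(* Let $\ell$ be a positive integer. Any partial $(n,k,t)_\lambda$-system has an $\ell$-presequencing $(U_0,\ldots,U_{s-1})$ with $s=\lceil\sigma\rceil$, where \[ \sigma=\sigma(n,k,t,\lambda)=\left(e(2^k-1)\left(k\lambda\binom{n-1}{t-1}\binom{k-1}{t-1}^{-1}-k+1\right)\right)^{\frac{1}{k-1}} \] and $e$ is the base of the natural logarithm.
   Context: For positive integers $n,k,t,\lambda$ with $n \geq k > t \geq 2$, a partial $(n,k,t)_\lambda$-system is a pair $(X,\mathcal{B})$ where $X$ is an $n$-set of vertices and $\mathcal{B}$ is a collection of $k$-subsets of $X$ (blocks) such that each $t$-subset of $X$ is contained in at most $\lambda$ blocks. An independent set is a subset of $X$ containing no block. An $\ell$-buffered set is a triple $(S,S^{L},S^{R})$ with $S^{L},S^{R}\subseteq S$ (buffers) such that: (B1) if $|S|\le \ell-2$ then $S^{L}=S^{R}=S$; (B2) if $\ell-1\le |S|\le 2\ell-2$ then $|S^{L}|=|S^{R}|=\ell-1$ and $S^{L}\cup S^{R}=S$; (B3) if $|S|\ge 2\ell-1$ then $|S^{L}|=|S^{R}|=\ell-1$ and $S^{L}\cap S^{R}=\emptyset$. An $\ell$-presequencing of $(X,\mathcal{B})$ is a tuple $(X_0,\ldots,X_{s-1})$ of $\ell$-buffered sets (classes) whose underlying sets partition $X$, such that (P1) each $X_i$ is independent, and (P2) for each $i\in\mathbb{Z}_s$, $X_i^{R}\cup X_{i+1}^{L}$ is independent (indices mod $s$). *)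

(* Defs.v *)
From HB Require Import structures.
From mathcomp Require Import all_boot all_order all_algebra.
From mathcomp Require Import all_classical all_reals all_analysis.
Set Implicit Arguments. Unset Strict Implicit. Unset Printing Implicit Defensive.
Import Order.TTheory GRing.Theory Num.Theory.

Section Defs.
Variable T : finType.

(* A block system on vertex set T is a list (multiset) of blocks. *)
Definition blocks_k_uniform (k : nat) (B : seq {set T}) : Prop :=
  forall b, b \in B -> #|b| = k.

Definition partial_system (n k t lam : nat) (B : seq {set T}) : Prop :=
  #|T| = n /\ blocks_k_uniform k B /\
  forall S : {set T}, #|S| = t -> (count (fun b : {set T} => S \subset b) B <= lam)%N.

Definition independent (B : seq {set T}) (S : {set T}) : bool :=
  all (fun b : {set T} => ~~ (b \subset S)) B.

(* l-buffered set (S, SL, SR); the inequalities are written without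
   truncated subtraction: |S| <= l-2  <->  |S|+2 <= l, etc. *)
Definition buffered (l : nat) (S SL SR : {set T}) : Prop :=
  SL \subset S /\ SR \subset S /\
  ((#|S| + 2 <= l)%N -> SL = S /\ SR = S) /\
  ((l <= #|S| + 1)%N -> (#|S| + 2 <= 2 * l)%N ->
      #|SL| = l.-1 /\ #|SR| = l.-1 /\ SL :|: SR = S) /\
  ((2 * l <= #|S| + 1)%N ->
      #|SL| = l.-1 /\ #|SR| = l.-1 /\ [disjoint SL & SR]).

(* l-presequencing (X_0, ..., X_{s-1}); class i is (S i, SL i, SR i);
   indices are taken mod s via ordS. *)
Definition presequencing (l s : nat) (B : seq {set T})
    (S SL SR : 'I_s -> {set T}) : Prop :=
  (forall i, buffered l (S i) (SL i) (SR i)) /\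
  (\bigcup_(i < s) S i = [set: T]) /\
  (forall i j : 'I_s, i != j -> [disjoint S i & S j]) /\
  (forall i, independent B (S i)) /\
  (forall i, independent B (SR i :|: SL (ordS i))).
End Defs.

Local Open Scope ring_scope.

Definition sigma (R : realType) (n k t lam : nat) : R :=
  powR (expR 1 * (2 ^+ k - 1) *
        ((k * lam * 'C(n.-1, t.-1))%:R / ('C(k.-1, t.-1))%:R - k%:R + 1))
       ((k.-1)%:R)^-1.

(* Main.v *)
Require Import Defs.
From HB Require Import structures.
From mathcomp Require Import all_boot all_order all_algebra.
From mathcomp Require Import zify ring.
Set Implicit Arguments. Unset Strict Implicit. Unset Printing Implicit Defensive.

Lemma leq_expn_base a b r : a <= b -> a ^ r <= b ^ r.
Proof. by move=> h; elim: r => // r IH; rewrite !expnS leq_mul. Qed.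

Section LLL.
Variables (Om : finType) (m : nat) (A : 'I_m -> {set Om})
  (Gam : 'I_m -> {set 'I_m}) (d c : nat).
Definition Gs (S : {set 'I_m}) : {set Om} := [set f | [forall j in S, f \notin A j]].
Hypotheses (c1 : 1 < c) (N0 : 0 < #|Om|) (hG : forall i, #|Gam i| <= d)
 (hind : forall i (S : {set 'I_m}), i \notin S -> [disjoint S & Gam i] ->
     #|A i :&: Gs S| * #|Om| = #|A i| * #|Gs S|)
 (hp : forall i, #|A i| * c ^ d.+1 <= (c.-1) ^ d * #|Om|).

Lemma Gs_sub (U V : {set 'I_m}) : U \subset V -> Gs V \subset Gs U.
Proof.
move=> hUV; apply/subsetP=> f; rewrite !inE => /forallP h.
apply/forallP=> j; apply/implyP=> hj; exact: (implyP (h j) (subsetP hUV j hj)).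
Qed.

Lemma Gs_add (W : {set 'I_m}) j : Gs (j |: W) = Gs W :\: A j.
Proof.
apply/setP=> f; rewrite !inE; apply/forallP/andP.
- move=> h; split; last first.
    by apply/forallP=> x; apply/implyP=> hx; apply: (implyP (h x)); rewrite !inE hx orbT.
  by have := implyP (h j); rewrite !inE eqxx /=; move=> /(_ isT).
- move=> [h1 /forallP h2] x; apply/implyP; rewrite !inE => /orP [/eqP->|hx] //.
  exact: (implyP (h2 x)).
Qed.

Definition claim n0 := forall i (S : {set 'I_m}), #|S| < n0 -> i \notin S ->
  #|A i :&: Gs S| * c <= #|Gs S|.

Lemma chain n0 : claim n0 -> forall k0 (U V : {set 'I_m}), #|V :\: U| = k0 -> U \subset V ->
  #|V| <= n0 -> (c.-1) ^ k0 * #|Gs U| <= c ^ k0 * #|Gs V|.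
Proof.
move=> H; elim=> [|k0 IH] U V hk hUV hV.
  have : V \subset U by rewrite -setD_eq0 -cards_eq0 hk.
  move=> hVU; have -> : V = U by apply/eqP; rewrite eqEsubset hVU hUV.
  by rewrite !expn0 !mul1n.
have [j hj] : exists j, j \in V :\: U by apply/set0Pn; rewrite -card_gt0 hk.
move: (hj); rewrite inE => /andP [hjU hjV].
set W := V :\ j.
have hW : #|W :\: U| = k0.
  have := cardsD1 j (V :\: U); rewrite hj hk add1n => [[e]]; rewrite e.
  by apply: eq_card => x; rewrite !inE; case: (x == j); rewrite ?andbF ?andbT.
have hUW : U \subset W.
  apply/subsetP=> x hx; rewrite !inE (subsetP hUV x hx) andbT.
  by apply/eqP=> e; rewrite -e hx in hjU.
have hWV : #|W| < #|V| by rewrite (cardsD1 j V) hjV.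
have IH1 := IH U W hW hUW (ltnW (leq_trans hWV hV)).
have hjW : j \notin W by rewrite !inE eqxx.
have Hc := H j W (leq_trans hWV hV) hjW.
have eV : V = j |: W by rewrite setD1K.
have eG : #|Gs W| = #|Gs V| + #|A j :&: Gs W|.
  by rewrite eV Gs_add -(cardsID (A j) (Gs W)) setIC addnC.
rewrite !expnS -!mulnA.
apply: (leq_trans (leq_mul (leqnn c.-1) IH1)).
rewrite mulnCA [c * _]mulnCA leq_mul2l; apply/orP; right.
move: Hc; rewrite eG; set a := #|_ :&: _|; set g := #|Gs V|; nia.
Qed.

Lemma claim_all n0 : claim n0.
Proof.
elim: n0 => [|n0 H] i S //.
move=> hS hi.
set S2 := S :\: Gam i.
set q := #|S :&: Gam i|.
have hq : #|S :\: S2| = q.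
  by apply: eq_card => x; rewrite !inE; case: (x \in S); case: (x \in Gam i).
have hS2 : S2 \subset S by apply: subsetDl.
have Hch := chain H hq hS2 hS.
have hi2 : i \notin S2 by rewrite inE negb_and hi orbT.
have hdis : [disjoint S2 & Gam i].
  by rewrite -setI_eq0; apply/eqP/setP=> x; rewrite !inE; case: (x \in Gam i); rewrite ?andbF.
have Hind := hind hi2 hdis.
have Hmon : #|A i :&: Gs S| <= #|A i :&: Gs S2|.
  by apply: subset_leq_card; apply: setIS; apply: Gs_sub.
have hqd : q <= d by apply: leq_trans (hG i); apply: subset_leq_card; apply: subsetIr.
have Hp := hp i.
apply: leq_trans (leq_mul Hmon (leqnn c)) _.
move: Hch Hind Hp; set X := #|A i :&: Gs S2|; set a := #|A i|; set g2 := #|Gs S2|.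
set g := #|Gs S|; set N := #|Om| => Hch Hind Hp.
have [r er] : exists r, d = q + r by exists (d - q); rewrite subnKC.
move: Hp; rewrite er expnS !expnD => Hp.
have Pq : 0 < (c.-1) ^ q by rewrite expn_gt0; apply/orP; left; rewrite -ltnS prednK ?(ltnW c1) // ltnW.
have Pc : 0 < c ^ q by rewrite expn_gt0 (ltnW c1).
have Pc' : 0 < c ^ r by rewrite expn_gt0 (ltnW c1).
have Hr : (c.-1) ^ r <= c ^ r by apply: leq_expn_base; apply: leq_pred.
set P := (c.-1) ^ q in Pq Hch Hp *; set Q := (c.-1) ^ r in Hr Hp *.
set C1 := c ^ q in Pc Hch Hp *; set C2 := c ^ r in Pc' Hr Hp *.
have K0 : 0 < N * (C1 * C2) * P by rewrite !muln_gt0 N0 Pc Pc' Pq.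
rewrite -(leq_pmul2r K0).
have e1 : X * c * (N * (C1 * C2) * P) = a * ((C1 * C2) * c) * g2 * P.
  have -> : X * c * (N * (C1 * C2) * P) = (X * N) * (C1 * C2 * c * P) by ring.
  by rewrite Hind; ring.
rewrite e1.
apply: leq_trans (_ : (P * Q * N) * g2 * P <= _).
  have Hp' : a * (C1 * C2 * c) <= P * Q * N by rewrite [C1 * C2 * c]mulnC.
  by rewrite leq_mul2r leq_mul2r Hp' !orbT.
apply: leq_trans (_ : Q * N * (C1 * g) * P <= _).
  have -> : P * Q * N * g2 * P = Q * N * (P * g2) * P by ring.
  by rewrite leq_mul2r leq_mul2l Hch !orbT.
have -> : Q * N * (C1 * g) * P = g * (N * (C1 * Q) * P) by ring.
rewrite leq_mul2l leq_mul2r leq_mul2l leq_mul2l Hr !orbT //.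
Qed.
Lemma lll_exists : exists f, f \in Gs setT.
Proof.
have H := @claim_all m.+1.
have h1 : #|[set: 'I_m] :\: set0| = m by rewrite setD0 cardsT card_ord.
have h2 : #|[set: 'I_m]| <= m.+1 by rewrite cardsT card_ord.
have hc := chain H h1 (sub0set _) h2.
have e0 : Gs set0 = setT by apply/setP=> f; rewrite !inE; apply/forallP=> j; rewrite inE.
rewrite e0 cardsT in hc.
have : 0 < #|Gs setT|.
  have P1 : 0 < c.-1 ^ m * #|Om| by rewrite muln_gt0 N0 expn_gt0 -ltnS prednK ?c1 // ltnW.
  by move: (leq_trans P1 hc); rewrite muln_gt0 => /andP [].
by rewrite card_gt0 => /set0Pn.
Qed.
End LLL.

Section Indep.
Variables (T C : finType) (b : {set T}).
Definition mixf (f g : {ffun T -> C}) : {ffun T -> C} :=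
  [ffun v => if v \in b then f v else g v].

Lemma indep (A E : {set {ffun T -> C}}) :
 (forall f g : {ffun T -> C}, (forall v, v \in b -> f v = g v) -> (f \in A) = (g \in A)) ->
 (forall f g : {ffun T -> C}, (forall v, v \notin b -> f v = g v) -> (f \in E) = (g \in E)) ->
 #|A :&: E| * #|{ffun T -> C}| = #|A| * #|E|.
Proof.
move=> hA hE.
rewrite -cardsT -!cardsX.
pose phi (p : {ffun T -> C} * {ffun T -> C}) := (mixf p.1 p.2, mixf p.2 p.1).
have phiK : involutive phi.
  move=> [f g]; rewrite /phi /=; congr pair; apply/ffunP=> v; rewrite !ffunE;
  by case: (v \in b).
have mA : forall f g, (mixf f g \in A) = (f \in A).
  by move=> f g; apply: hA => v hv; rewrite ffunE hv.
have mE : forall f g, (mixf f g \in E) = (g \in E).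
  by move=> f g; apply: hE => v hv; rewrite ffunE (negbTE hv).
have -> : setX (A :&: E) setT = phi @: setX A E.
  apply/setP=> q; apply/idP/imsetP.
  - rewrite !inE andbT => /andP [q1A q1E].
    exists (phi q); last by rewrite phiK.
    by rewrite !inE /phi /= mA mE q1A q1E.
  - move=> [p]; rewrite !inE => /andP [h1 h2] ->.
    by rewrite /phi /= mA mE h1 h2.
by rewrite card_imset //; apply: inv_inj phiK.
Qed.
End Indep.

Lemma card_bigcup_leq (I T : finType) (F : I -> {set T}) :
  #|\bigcup_(i : I) F i| <= \sum_(i : I) #|F i|.
Proof.
elim/big_ind2 : _ => // [|m A n B Am Bn]; first by rewrite cards0.
by rewrite (leq_trans (leq_card_setU _ _))// leq_add.
Qed.

Lemma card_restr (T C : finType) (b : {set T}) (P : {set C}) :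
 #|[set f : {ffun T -> C} | [forall v in b, f v \in P]]| =
   #|P| ^ #|b| * #|C| ^ (#|T| - #|b|).
Proof.
pose F := fun v : T => if v \in b then P else setT.
have -> : #|[set f : {ffun T -> C} | [forall v in b, f v \in P]]| = #|family F|.
  apply: eq_card => f; rewrite inE; apply/forallP/familyP => h x.
    by rewrite /F; case: ifP => hx; [exact: (implyP (h x) hx) | rewrite inE].
  by apply/implyP=> hx; have := h x; rewrite /F hx.
rewrite card_family foldrE big_map big_enum /=.
rewrite (bigID (fun x => x \in b)) /=.
rewrite (eq_bigr (fun _ => #|P|)); last by move=> x hx; rewrite /F hx.
rewrite [X in _ * X](eq_bigr (fun _ => #|C|)); last first.
  by move=> x hx; rewrite /F (negbTE hx) cardsT.
rewrite !prod_nat_const; congr (_ ^ _ * _ ^ _).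

by rewrite -(cardsC b) addKn; apply: eq_card => x; rewrite !inE.
Qed.

Lemma ordS_neq s (c : 'I_s) : 1 < s -> ordS c != c.
Proof.
move=> hs; apply/eqP=> /(congr1 val) /=.
have hc := ltn_ord c.
case: (ltnP c.+1 s) => h.
  by rewrite modn_small // => /eqP; rewrite -[X in _ == X]addn0 -addn1 eqn_add2l.
have e : c.+1 = s by apply/eqP; rewrite eqn_leq hc h.
by rewrite e modnn => e0; move: e; rewrite -e0 => e1; rewrite -e1 in hs.
Qed.

Section Aev.
Variables (T : finType) (s : nat).
Definition Aev (b : {set T}) : {set {ffun T -> 'I_s}} :=
  [set f : {ffun T -> 'I_s} | [exists c : 'I_s, b \subset [set v | (f v == c) || (f v == ordS c)]]].

Lemma card_Aev (b : {set T}) : 1 < s -> 0 < #|b| ->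
  #|Aev b| <= s * ((2 ^ #|b| - 1) * s ^ (#|T| - #|b|)).
Proof.
move=> hs hb.
pose F c := [set f : {ffun T -> 'I_s} | [forall v in b, f v \in [set c; ordS c]]].
pose F' c := [set f : {ffun T -> 'I_s} | [forall v in b, f v \in [set ordS c]]].
have key : forall (f : {ffun T -> 'I_s}) (c : 'I_s), (forall v, v \in b -> f v \in [set c; ordS c]) ->
    (exists2 v, v \in b & f v = c) -> f \in \bigcup_(c0 : 'I_s) (F c0 :\: F' c0).
  move=> f c h1 [v hv hfv]; apply/bigcupP; exists c => //.
  rewrite !inE; apply/andP; split.
    apply/negP=> /forallP /(_ v); rewrite hv /= inE hfv => /eqP e.
    by have := ordS_neq c hs; rewrite -e eqxx.
  by apply/forallP=> x; apply/implyP=> hx; exact: h1.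
have sub : Aev b \subset \bigcup_(c : 'I_s) (F c :\: F' c).
  apply/subsetP=> f; rewrite inE => /existsP [c /subsetP hc].
  case: (boolP [exists v in b, f v == c]) => [/existsP [v /andP [hv /eqP e]]|hn].
    apply: (key f c) => [x hx|]; last by exists v.
    by have := hc x hx; rewrite !inE.
  have hall : forall x, x \in b -> f x = ordS c.
    move=> x hx; have := hc x hx; rewrite inE => /orP [/eqP e|/eqP //].
    by move: hn; rewrite negb_exists => /forallP /(_ x); rewrite hx e eqxx.
  have [v0 hv0] : exists v, v \in b by apply/set0Pn; rewrite -card_gt0.
  apply: (key f (ordS c)) => [x hx|]; last by exists v0 => //; rewrite hall.
  by rewrite hall // !inE eqxx.
apply: leq_trans (subset_leq_card sub) _.
apply: leq_trans (card_bigcup_leq _) _.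
rewrite (eq_bigr (fun _ => (2 ^ #|b| - 1) * s ^ (#|T| - #|b|))); last first.
  move=> c _.
  have hsub : F' c \subset F c.
    apply/subsetP=> f; rewrite !inE => /forallP h; apply/forallP=> x.
    by apply/implyP=> hx; have := implyP (h x) hx; rewrite !inE => ->; rewrite orbT.
  rewrite cardsD (setIidPr hsub) /F /F' !card_restr cards2 eq_sym ordS_neq //.
  by rewrite cards1 exp1n mul1n card_ord mulnBl mul1n.
by rewrite sum_nat_const card_ord.
Qed.
End Aev.

Lemma card_bigcup_leqP (I T : finType) (P : pred I) (F : I -> {set T}) :
  #|\bigcup_(i | P i) F i| <= \sum_(i | P i) #|F i|.
Proof.
elim/big_ind2 : _ => // [|m A n B Am Bn]; first by rewrite cards0.
by rewrite (leq_trans (leq_card_setU _ _))// leq_add.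
Qed.

Section Deg.
Variable T : finType.

Lemma cnt_sub (X : {set T}) v t : v \in X -> 0 < t ->
  #|[set S : {set T} | (S \subset X) && (v \in S) && (#|S| == t)]| = 'C(#|X|.-1, t.-1).
Proof.
move=> hv ht.
have eX : #|X|.-1 = #|X :\ v| by rewrite (cardsD1 v X) hv.
rewrite eX -cards_draws.
have -> : [set S : {set T} | (S \subset X) && (v \in S) && (#|S| == t)] =
    (fun S' : {set T} => v |: S') @: [set S' : {set T} | S' \subset X :\ v & #|S'| == t.-1].
  apply/setP=> S; apply/idP/imsetP.
  - rewrite inE => /andP [/andP [hSX hvS] /eqP hS].
    exists (S :\ v); last by rewrite setD1K.
    rewrite inE; apply/andP; split; first by apply: setSD.
    by rewrite (cardsD1 v S) hvS in hS; rewrite -hS.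
  - move=> [S' ]; rewrite inE => /andP [hS' /eqP hc] ->.
    have hvS' : v \notin S' by apply/negP=> h; have := subsetP hS' v h; rewrite !inE eqxx.
    rewrite inE setU11 andbT; apply/andP; split.
      rewrite subUset sub1set hv /=; apply: subset_trans hS' _; apply: subsetDl.
    by rewrite cardsU1 hvS' hc add1n prednK.
rewrite card_in_imset // => A1 A2; rewrite !inE => /andP [h1 _] /andP [h2 _] e.
have n1 : v \notin A1 by apply/negP=> h; have := subsetP h1 v h; rewrite !inE eqxx.
have n2 : v \notin A2 by apply/negP=> h; have := subsetP h2 v h; rewrite !inE eqxx.
by rewrite -(setU1K n1) -(setU1K n2) e.
Qed.

Variable B : seq {set T}.
Definition bl (j : 'I_(size B)) := nth set0 B j.

Lemma count_card (P : pred {set T}) :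
  #|[set j : 'I_(size B) | P (bl j)]| = count P B.
Proof.
by rewrite -sum1_count (big_nth set0) big_mkord sum1dep_card.
Qed.

Variables (n k t lam : nat).
Hypotheses (hB : forall b, b \in B -> #|b| = k) (hT : #|T| = n)
  (hl : forall S : {set T}, #|S| = t -> count (fun b : {set T} => S \subset b) B <= lam)
  (ht : 0 < t).

Lemma deg_bound v : #|[set j | v \in bl j]| * 'C(k.-1, t.-1) <= lam * 'C(n.-1, t.-1).
Proof.
pose Q (S : {set T}) := (v \in S) && (#|S| == t).
have hTv : #|[set S : {set T} | Q S]| = 'C(n.-1, t.-1).
  rewrite -hT -cardsT -(cnt_sub (X := setT) (v := v)) ?inE //.
  by apply: eq_card => S; rewrite !inE subsetT.
have e1 : forall j : 'I_(size B), v \in bl j ->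
    'C(k.-1, t.-1) = \sum_(S : {set T}) (if (S \subset bl j) && Q S then 1 else 0).
  move=> j hj; rewrite -big_mkcond sum1dep_card -(hB (mem_nth set0 (ltn_ord j))).
  rewrite -(cnt_sub (X := bl j) hj ht); apply: eq_card => S; rewrite !inE /Q andbA //.
rewrite -sum1dep_card big_distrl /=.
rewrite (eq_bigr (fun j => \sum_(S : {set T}) (if (S \subset bl j) && Q S then 1 else 0)));
  last by move=> j hj; rewrite mul1n (e1 j hj).
apply: leq_trans (_ : \sum_(j : 'I_(size B)) \sum_(S : {set T})
   (if (S \subset bl j) && Q S then 1 else 0) <= _).
  rewrite [X in _ <= X](bigID (fun j => v \in bl j)) /=; exact: leq_addr.
rewrite exchange_big /=.
apply: leq_trans (_ : \sum_(S : {set T}) (if Q S then lam else 0) <= _).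
  apply: leq_sum => S _; case: (boolP (Q S)) => hQ.
    rewrite (eq_bigr (fun j => if S \subset bl j then 1 else 0)); last first.
      by move=> j _; rewrite andbT.
    rewrite -big_mkcond sum1dep_card (count_card (fun b => S \subset b)); apply: hl.
    by move: hQ => /andP [_ /eqP].
  by rewrite big1 // => j _; rewrite andbF.
rewrite -big_mkcond /= sum_nat_const -hTv mulnC leq_mul2l; apply/orP; right.
by rewrite cardsE.
Qed.

Definition Gam (i : 'I_(size B)) :=
  [set j | (j != i) && ~~ [disjoint bl j & bl i]].

Lemma gam_bound i :
  #|Gam i| * 'C(k.-1, t.-1) <= k * (lam * 'C(n.-1, t.-1) - 'C(k.-1, t.-1)).
Proof.
set C := 'C(k.-1, t.-1); set C' := 'C(n.-1, t.-1).
have sub : Gam i \subset \bigcup_(v | v \in bl i) ([set j | v \in bl j] :\ i).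
  apply/subsetP=> j; rewrite inE => /andP [hji]; rewrite -setI_eq0 => /set0Pn [v].
  rewrite inE => /andP [hv1 hv2]; apply/bigcupP; exists v => //.
  by rewrite !inE hji hv1.
apply: leq_trans (leq_mul (subset_leq_card sub) (leqnn C)) _.
apply: leq_trans (leq_mul (card_bigcup_leqP _ _) (leqnn C)) _.
rewrite big_distrl /=.
rewrite -(hB (mem_nth set0 (ltn_ord i))) -/(bl i) -sum_nat_const.
apply: leq_sum => v hv.
have hi : i \in [set j | v \in bl j] by rewrite inE.
have := deg_bound v; rewrite -/C -/C' (cardsD1 i [set j | v \in bl j]) hi add1n.
by rewrite mulSn => h; rewrite leq_subRL // ?(leq_trans (leq_addr _ _) h).
Qed.
End Deg.

Section Buf.
Variables (T : finType) (l : nat).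
Definition bufL (X : {set T}) := [set x in take l.-1 (enum X)].
Definition bufR (X : {set T}) := [set x in drop (#|X| - l.-1) (enum X)].

Lemma card_set_uniq (s : seq T) : uniq s -> #|[set x in s]| = size s.
Proof. by move=> u; rewrite cardsE; apply/card_uniqP. Qed.

Lemma buf_ok X : 0 < l -> buffered l X (bufL X) (bufR X).
Proof.
move=> l0.
set e := enum X.
have ue : uniq e by apply: enum_uniq.
have se : size e = #|X| by rewrite cardE.
have me : forall x, (x \in e) = (x \in X) by move=> x; rewrite mem_enum.
rewrite /buffered /bufL /bufR -/e.
split; first by apply/subsetP=> x; rewrite inE => /mem_take; rewrite me.
split; first by apply/subsetP=> x; rewrite inE => /mem_drop; rewrite me.
split.
  move=> h; rewrite take_oversize; last by rewrite se; lia.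
  have -> : #|X| - l.-1 = 0 by lia.
  by rewrite drop0; split; apply/setP=> x; rewrite inE me.
split.
  move=> h1 h2.
  have hl1 : l.-1 <= size e by rewrite se; lia.
  split; first by rewrite card_set_uniq ?take_uniq // size_takel.
  split; first by rewrite card_set_uniq ?drop_uniq // size_drop se; lia.
  apply/setP=> x; rewrite !inE; apply/idP/idP.
    by case/orP; [move/mem_take | move/mem_drop]; rewrite me.
  rewrite -me -{1}(cat_take_drop (#|X| - l.-1) e) mem_cat => /orP [hx|->]; last by rewrite orbT.
  move: hx; rewrite -(take_takel _ (_ : #|X| - l.-1 <= l.-1)); last by lia.
  by move/mem_take=> ->.
move=> h.
have hl1 : l.-1 <= size e by rewrite se; lia.
split; first by rewrite card_set_uniq ?take_uniq // size_takel.
split; first by rewrite card_set_uniq ?drop_uniq // size_drop se; lia.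
rewrite -setI_eq0; apply/eqP/setP=> x; rewrite !inE; apply/negP=> /andP [h1 h2].
have h3 : x \in drop l.-1 e.
  move: h2; have -> : #|X| - l.-1 = (#|X| - l.-1 - l.-1) + l.-1 by lia.
  by rewrite -drop_drop => /mem_drop.
move: ue; rewrite -(cat_take_drop l.-1 e) cat_uniq => /and3P [_ /hasP hh _].
by apply: hh; exists x.
Qed.
End Buf.

From mathcomp Require Import all_classical all_reals all_analysis.
From mathcomp Require Import lra.
Import Order.TTheory GRing.Theory Num.Theory.
Local Notation subsetP := fintype.subsetP.
Local Notation subset_trans := fintype.subset_trans.
Local Notation subUset := finset.subUset.
Local Notation inE := finset.inE.

Lemma key_exp (R : realType) (d : nat) :
  ((d.+2)%:R ^+ d.+1 <= expR 1 * (d.+1)%:R ^+ d.+1 :> R)%R.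
Proof.
have h1 : ((d.+2)%:R <= (d.+1)%:R * expR ((d.+1)%:R^-1) :> R)%R.
  have := expR_ge1Dx ((d.+1)%:R^-1 : R) => h.
  have -> : ((d.+2)%:R = (d.+1)%:R * (1 + (d.+1)%:R^-1) :> R)%R.
    by rewrite mulrDr mulr1 mulfV // -addn1 natrD.
  by rewrite ler_pM2l // ltr0n.
have -> : (expR 1 = expR ((d.+1)%:R^-1) ^+ d.+1 :> R)%R.
  by rewrite -expRM_natr mulVf.
rewrite -exprMn.
apply: lerXn2r; rewrite ?qualifE /= ?ler0n ?mulr_ge0 ?expR_ge0 //.
by rewrite mulrC.
Qed.

Lemma real_part (R : realType) (n k t lam s d : nat) :
  (0 < t)%N -> (t < k)%N -> (0 < lam)%N -> (k <= n)%N ->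
  (d * 'C(k.-1,t.-1) <= k * (lam * 'C(n.-1,t.-1) - 'C(k.-1,t.-1)))%N ->
  (s%:Z = Num.ceil (sigma R n k t lam))%R ->
  ((2 ^ k - 1) * d.+2 ^ d.+1 <= d.+1 ^ d * s ^ k.-1)%N.
Proof.
move=> t0 tk lam0 kn hd hs.
set C := 'C(k.-1,t.-1) in hd *; set C' := 'C(n.-1,t.-1) in hd *.
have C0 : (0 < C)%N by rewrite bin_gt0; lia.
have hCC : (C <= lam * C')%N.
  apply: leq_trans (leq_bin2l _ (_ : k.-1 <= n.-1)%N) _; first by lia.
  by rewrite -/C'; apply: leq_pmull.
have hnat : ((d + k) * C <= k * lam * C')%N.
  have : (k * C <= k * (lam * C'))%N by rewrite leq_mul2l hCC orbT.
  move: hd; rewrite mulnBr mulnDl -mulnA; lia.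
set K : R := ((k * lam * C')%:R / C%:R - k%:R + 1)%R.
have hK : ((d.+1)%:R <= K)%R.
  have : ((d + k)%:R <= (k * lam * C')%:R / C%:R :> R)%R.
    by rewrite ler_pdivlMr ?ltr0n // -natrM ler_nat.
  rewrite /K natrD -addn1 natrD; lra.
have K1 : (1 <= K)%R by apply: le_trans hK; rewrite ler1n.
set X : R := (expR 1 * (2 ^+ k - 1) * K)%R.
have h2k : (1 <= 2 ^ k)%N by rewrite expn_gt0.
have e2k : ((2 ^+ k - 1 : R) = (2 ^ k - 1)%N%:R)%R by rewrite natrB // natrX.
have X0 : (0 <= X)%R.
  by rewrite /X e2k !mulr_ge0 ?expR_ge0 ?ler0n //; apply: le_trans K1.
have sigE : sigma R n k t lam = (X `^ (k.-1)%:R^-1)%R by [].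
have k1 : (k.-1 != 0)%N by lia.
have sigX : (sigma R n k t lam ^+ k.-1 = X)%R.
  rewrite sigE -powR_mulrn ?powR_ge0 // -powRrM mulVf ?powRr1 //.
  by rewrite pnatr_eq0.
have sle : (sigma R n k t lam <= s%:R)%R.
  by apply: le_trans (ceil_ge _) _; rewrite -hs.
have Xle : (X <= s%:R ^+ k.-1)%R.
  rewrite -sigX; apply: lerXn2r; rewrite ?qualifE /= ?ler0n //.
  by rewrite sigE powR_ge0.
rewrite -(ler_nat R) !natrM !natrX -e2k.
have h2 : ((0 : R) <= 2 ^+ k - 1)%R by rewrite e2k ler0n.
apply: le_trans (_ : ((2 ^+ k - 1) * (expR 1 * (d.+1)%:R ^+ d.+1) <= _ :> R)%R).
  by rewrite ler_wpM2l // key_exp.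
apply: le_trans (_ : ((d.+1)%:R ^+ d * X <= _ :> R)%R); last first.
  by rewrite ler_wpM2l ?exprn_ge0 ?ler0n.
rewrite /X exprS.
have : ((d.+1)%:R * ((d.+1)%:R ^+ d) <= K * ((d.+1)%:R ^+ d) :> R)%R.
  by rewrite ler_wpM2r ?exprn_ge0 ?ler0n.
have := expR_ge0 (1 : R).
set a := expR 1; set b := ((d.+1)%:R ^+ d : R)%R; set u := (2 ^+ k - 1 : R)%R.
move: h2 => h2 ha hb.
have : (0 <= a * u)%R by rewrite mulr_ge0.
nra.
Qed.

Lemma Aev_agree (T : finType) (s : nat) (b : {set T}) (f g : {ffun T -> 'I_s}) :
  (forall v, v \in b -> f v = g v) -> (f \in Aev s b) = (g \in Aev s b).
Proof.
move=> hfg; rewrite !inE; apply: eq_existsb => c.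
by apply/subsetP/subsetP => h v hv; have := h v hv; rewrite !inE (hfg v hv).
Qed.

Theorem lemma8 (R : realType) (n k t lam l : nat) (T : finType)
    (B : seq {set T}) (s : nat) :
  (0 < l)%N -> (0 < lam)%N -> (2 <= t)%N -> (t < k)%N -> (k <= n)%N ->
  partial_system n k t lam B ->
  (s%:Z = Num.ceil (sigma R n k t lam))%R ->
  exists S SL SR : 'I_s -> {set T}, presequencing l B S SL SR.
Proof.
move=> l0 lam0 t2 tk kn [hT [hB hl]] hs.
have t0 : (0 < t)%N by lia.
set C := 'C(k.-1,t.-1); set C' := 'C(n.-1,t.-1).
have C0 : (0 < C)%N by rewrite bin_gt0; lia.
pose d := (\max_(i < size B) #|@Gam T B i|)%N.
have hd : (d * C <= k * (lam * C' - C))%N.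
  have : (d <= (k * (lam * C' - C)) %/ C)%N.
    apply/bigmax_leqP => i _; rewrite leq_divRL //.
    exact: (@gam_bound T B n k t lam hB hT hl t0 i).
  by move=> h; apply: leq_trans (leq_mul h (leqnn C)) (leq_divM _ _).
have hreal := @real_part R n k t lam s d t0 tk lam0 kn hd hs.
have s1 : (1 < s)%N.
  have hlt : (d.+1 ^ d < d.+2 ^ d.+1)%N.
    apply: leq_ltn_trans (leq_expn_base d (leqnSn d.+1)) _.
    by rewrite expnS ltn_Pmull // expn_gt0.
  have h2k : (1 <= 2 ^ k - 1)%N.
    have : (2 <= 2 ^ k)%N by rewrite -{1}(expn1 2) leq_exp2l //; lia.
    lia.
  move: hreal; case: s {hs} => [|[|s']] //.
    rewrite exp0n ?muln0; last by lia.
    move=> h; have pos : (0 < (2 ^ k - 1) * d.+2 ^ d.+1)%N by rewrite muln_gt0 expn_gt0 andbT; lia.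
    by have := leq_trans pos h.
  rewrite exp1n muln1 => h.
  have := leq_trans (leq_pmull _ h2k) h; lia.
have [f hf] : exists f : {ffun T -> 'I_s},
    f \in Gs (fun i => Aev s (@bl T B i)) [set: 'I_(size B)].
  apply: (@lll_exists _ (size B) (fun i => Aev s (@bl T B i)) (@Gam T B) d d.+2 isT).

- by rewrite card_ffun card_ord expn_gt0; apply/orP; left; lia.
- by move=> i; rewrite /d; apply: (@leq_bigmax _ (fun i => #|@Gam T B i|) i).
- move=> i S hi hdis; apply: (indep (b := @bl T B i)).
    by move=> f g hfg; apply: Aev_agree.
  move=> f g hfg; rewrite !inE; apply: eq_forallb => j.
  case hj: (j \in S) => //=; congr negb; apply: Aev_agree => v hv; apply: hfg.
  have hji : j != i by apply/eqP=> e; rewrite -e hj in hi.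
  have hjG : j \notin @Gam T B i.
    by apply/negP=> h; move: hdis; rewrite -setI_eq0 => /eqP /setP /(_ j); rewrite !inE hj hji /=; move: h; rewrite inE => /andP [_ ->].
  by move: hjG; rewrite inE hji /= negbK => hd0; rewrite (disjointFr hd0 hv).
- move=> i.
  have hbi : #|@bl T B i| = k by apply: hB; apply: mem_nth.
  have := card_Aev s1 (b := @bl T B i); rewrite hbi hT => /(_ (leq_trans t0 (ltnW tk))) hA.
  rewrite card_ffun card_ord hT /=.
  have e : (s ^ n = (s * s ^ (n - k)) * s ^ k.-1)%N.
    rewrite mulnAC -expnS prednK; last by lia.
    by rewrite -expnD subnKC.
  apply: leq_trans (leq_mul hA (leqnn _)) _.
  rewrite e.
  have -> : (s * ((2 ^ k - 1) * s ^ (n - k)) * d.+2 ^ d.+1 =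
      (s * s ^ (n - k)) * ((2 ^ k - 1) * d.+2 ^ d.+1))%N by ring.
  have -> : (d.+1 ^ d * (s * s ^ (n - k) * s ^ k.-1) =
      (s * s ^ (n - k)) * (d.+1 ^ d * s ^ k.-1))%N by ring.
  by rewrite leq_mul2l hreal orbT.
move: hf; rewrite inE => /forallP hf.
pose S := fun c : 'I_s => [set v | f v == c].
have indX : forall (X : {set T}) (c : 'I_s),
    X \subset [set v | (f v == c) || (f v == ordS c)] -> independent B X.
  move=> X c hX; apply/allP => b hb; apply/negP => hbX.
  have hj : (index b B < size B)%N by rewrite index_mem.
  have := hf (Ordinal hj); rewrite inE /= /bl nth_index // inE.
  by move/negP; apply; apply/existsP; exists c; apply: subset_trans hbX hX.
exists S, (fun c => bufL l (S c)), (fun c => bufR l (S c)).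
split; first by move=> i; apply: buf_ok.
split.
  apply/setP=> v; rewrite inE; apply/bigcupP; exists (f v) => //.
  by rewrite inE.
split.
  move=> i j hij; rewrite -setI_eq0; apply/eqP/setP=> v; rewrite !inE.
  apply/negP=> /andP [/eqP h1 /eqP h2]; move: hij; rewrite -h1 -h2 eqxx //.
split.
  move=> i; apply: (indX _ i); apply/subsetP=> v; rewrite !inE => ->; by [].
move=> i; apply: (indX _ i).
have [hL [_ _]] := @buf_ok T l (S (ordS i)) l0.
have [_ [hR _]] := @buf_ok T l (S i) l0.
rewrite subUset; apply/andP; split.
  apply: subset_trans hR _; apply/subsetP=> v; rewrite !inE => ->; by [].
apply: subset_trans hL _; apply/subsetP=> v; rewrite !inE => ->; by rewrite orbT.
Qed.
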